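(* Assume (A1) with $p\in(1,2]$, and that $\mathscr V^*=\mathscr V^*_1\cup\mathscr V^*_2$ with $\mathscr V^*_1,\mathscr V^*_2$ disjoint, compact, convex, with smooth boundaries. Let $\vartheta\ge\ell\operatorname{diam}(\mathscr V^* )^p-\underline f$. Then for every $v\in\mathbb R^d$: $$A(w,v)-A(V^*_1(v),v)\ge\|w-V^*_1(v)\|_2^2-2\Big(\frac{2^p\varkappa}{\ell^2}\Big)^{\frac1{p-1}}\quad\text{for all }w\in\mathcal Z_1,$$ $$A(w,v)-A(V^*_2(v),v)\ge\|w-V^*_2(v)\|_2^2-2\Big(\frac{2^p\varkappa}{\ell^2}\Big)^{\frac1{p-1}}\quad\text{for all }w\in\mathcal Z_2.$$
   Context: $f:\mathbb R^d\to\mathbb R$ continuous, $\underline f:=\inf f>-\infty$, $\mathscr V^*$ the set of global minimizers, $\operatorname{dist}(w,\mathscr V^* )$ Euclidean distance, $\operatorname{diam}(\mathscr V^* )=\sup_{v,w\in\mathscr V^*}\|v-w\|_2$. (A1): there are $\ell>0$, $p\in[1,2]$ with $f(w)-\underline f\ge\ell\operatorname{dist}(w,\mathscr V^* )^p$ for all $w$. $A(w,v):=\frac1\varkappa f(w)(f(v)+\vartheta)+\|v-w\|_2^2$ with $\varkappa>0$. $V^*_i(v):=\arg\min_{w\in\mathscr V^*_i}\|v-w\|_2$, $\mathcal Z_1:=\{v:\operatorname{dist}(v,\mathscr V^*_1)<\operatorname{dist}(v,\mathscr V^*_2)\}$, $\mathcal Z_2:=\{v:\operatorname{dist}(v,\mathscr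 V^*_2)<\operatorname{dist}(v,\mathscr V^*_1)\}$. *)

(* Defs.v *)
From HB Require Import structures.
From mathcomp Require Import all_boot all_order all_algebra.
From mathcomp Require Import all_classical all_reals all_analysis.
Set Implicit Arguments. Unset Strict Implicit. Unset Printing Implicit Defensive.
Import Order.TTheory GRing.Theory Num.Theory.
Import numFieldNormedType.Exports.
Local Open Scope classical_set_scope.
Local Open Scope ring_scope.

Section Defs.
Variables (R : realType) (d : nat).
Notation V := 'rV[R]_d.

Definition enorm (x : V) : R := Num.sqrt (\sum_(i < d) x ord0 i ^+ 2).

Definition dist_set (S : set V) (x : V) : R :=
  inf [set enorm (x - y) | y in S].

Definition diam (S : set V) : R :=
  sup [set enorm (y - z) | y in S & z in S].

Definition finf (f : V -> R) : R := inf (range f).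

Definition minimizers (f : V -> R) : set V := [set w | f w = finf f].

Definition convex_set_ (S : set V) : Prop :=
  forall x y, S x -> S y -> forall t : R, 0 <= t <= 1 ->
    S (t *: x + (1 - t) *: y).

Fixpoint Ck (n : nat) (g : V -> R) : Prop :=
  match n with
  | 0%N => continuous g
  | n'.+1 => (forall x, differentiable g x) /\
             forall v : V, Ck n' (fun x => 'D_v g x)
  end.

Definition smooth (g : V -> R) : Prop := forall n, Ck n g.

Definition smooth_boundary (S : set V) : Prop :=
  forall x, (closure S `\` interior S) x ->
    exists (U : set V) (g : V -> R),
      [/\ open U, U x, smooth g, (exists v : V, 'D_v g x != 0) &
          S `&` U = [set y | g y <= 0] `&` U].

Definition Afun (f : V -> R) (kappa theta : R) (w v : V) : R :=
  kappa^-1 * f w * (f v + theta) + enorm (v - w) ^+ 2.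

End Defs.

(* Main.v *)
Require Import Defs.
From HB Require Import structures.
From mathcomp Require Import all_boot all_order all_algebra.
From mathcomp Require Import all_classical all_reals all_analysis.
From mathcomp Require Import ring lra.
Import Order.TTheory GRing.Theory Num.Theory.
Import numFieldNormedType.Exports.
Local Open Scope classical_set_scope.
Local Open Scope ring_scope.

Section S.
Variables (R : realType) (d : nat).
Notation V := 'rV[R]_d.
Implicit Types x y z : V.
Definition dot (x y : V) : R := \sum_(i < d) x ord0 i * y ord0 i.

Lemma dotC x y : dot x y = dot y x.
Proof. by apply: eq_bigr => i _; rewrite mulrC. Qed.
Lemma dotDl x y z : dot (x + y) z = dot x z + dot y z.
Proof. by rewrite /dot -big_split; apply: eq_bigr => i _; rewrite mxE mulrDl. Qed.
Lemma dotNl x z : dot (- x) z = - dot x z.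
Proof. by rewrite /dot -sumrN; apply: eq_bigr => i _; rewrite mxE mulNr. Qed.
Lemma dotZl a x z : dot (a *: x) z = a * dot x z.
Proof. by rewrite /dot mulr_sumr; apply: eq_bigr => i _; rewrite mxE mulrA. Qed.
Lemma dotBl x y z : dot (x - y) z = dot x z - dot y z.
Proof. by rewrite dotDl dotNl. Qed.
Lemma dotDr x y z : dot z (x + y) = dot z x + dot z y.
Proof. by rewrite dotC dotDl !(dotC z). Qed.
Lemma dotBr x y z : dot z (x - y) = dot z x - dot z y.
Proof. by rewrite dotC dotBl !(dotC z). Qed.
Lemma dotZr a x z : dot z (a *: x) = a * dot z x.
Proof. by rewrite dotC dotZl dotC. Qed.
Lemma dot_ge0 x : 0 <= dot x x.
Proof. by apply: sumr_ge0 => i _; rewrite -expr2 sqr_ge0. Qed.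
Lemma enorm_ge0 x : 0 <= enorm x.
Proof. exact: sqrtr_ge0. Qed.
Lemma enorm_sq x : enorm x ^+ 2 = dot x x.
Proof. by rewrite /enorm sqr_sqrtr //; apply: sumr_ge0 => i _; rewrite sqr_ge0. Qed.

Lemma cs x y : dot x y <= enorm x * enorm y.
Proof.
have key : forall t, 0 <= dot x x - 2 * t * dot x y + t ^+ 2 * dot y y.
  move=> t; have := dot_ge0 (x - t *: y).
  rewrite dotBl !dotBr !dotZl !dotZr (dotC y x).
  by move=> h; apply: le_trans h _; rewrite le_eqVlt; apply/orP; left; apply/eqP; ring.
have hx := enorm_sq x; have hy := enorm_sq y.
have gx := enorm_ge0 x; have gy := enorm_ge0 y.
have [y0|yn0] := eqVneq (dot y y) 0.
  have [b0|bn0] := eqVneq (dot x y) 0.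
    by rewrite b0 mulr_ge0.
  have := key ((dot x x + 1) / (2 * dot x y)).
  have -> : 2 * ((dot x x + 1) / (2 * dot x y)) * dot x y = dot x x + 1 by field.
  rewrite y0 mulr0 addr0; lra.
have ypos : 0 < dot y y by rewrite lt0r yn0 dot_ge0.
have := key (dot x y / dot y y).
have -> : dot x x - 2 * (dot x y / dot y y) * dot x y + (dot x y / dot y y) ^+ 2 * dot y y
   = dot x x - (dot x y) ^+ 2 / dot y y by field; rewrite gt_eqF.
rewrite subr_ge0 ler_pdivrMr // -hx -hy => h.
have : dot x y ^+ 2 <= (enorm x * enorm y) ^+ 2 by rewrite exprMn.
have := mulr_ge0 gx gy.
move: (enorm x * enorm y) (dot x y) => P b P0 hb.
nra.
Qed.

Lemma enormN x : enorm (- x) = enorm x.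
Proof. by rewrite /enorm; congr Num.sqrt; apply: eq_bigr => i _; rewrite mxE sqrrN. Qed.
Lemma enormB x y : enorm (x - y) = enorm (y - x).
Proof. by rewrite -enormN opprB. Qed.

Lemma enormD x y : enorm (x + y) <= enorm x + enorm y.
Proof.
have h := enorm_sq (x + y); rewrite dotDl !dotDr (dotC y x) -!enorm_sq in h.
have := cs x y; have := enorm_ge0 (x+y); have := enorm_ge0 x; have := enorm_ge0 y.
move=> g1 g2 g3 c.
have : enorm (x + y) ^+ 2 <= (enorm x + enorm y) ^+ 2 by rewrite h; nra.
by rewrite -ler_sqrt ?sqrtr_sqr ?ger0_norm // ?addr_ge0 // sqr_ge0.
Qed.
Lemma enorm0 : enorm (0 : V) = 0.
Proof. by rewrite /enorm big1 ?sqrtr0 // => i _; rewrite mxE expr0n. Qed.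

Lemma coord_le x i : `|x ord0 i| <= `|x|.
Proof.
have -> : `|x| = mx_norm x by [].
rewrite mx_normrE.
exact: (le_bigmax _ _ (ord0, i)).
Qed.

Lemma enorm_le_mx x : enorm x <= d.+1%:R * `|x|.
Proof.
rewrite /enorm -[X in _ <= X]ger0_norm ?mulr_ge0 // -sqrtr_sqr ler_sqrt ?exprn_ge0 ?mulr_ge0 //.
apply: le_trans (_ : \sum_(i < d) `|x|^+2 <= _).
  apply: ler_sum => i _; rewrite -real_normK ?num_real //.
  by rewrite lerXn2r ?nnegrE ?normr_ge0 // coord_le.
rewrite sumr_const card_ord exprMn -mulr_natl.
rewrite -[X in X <= _]mulr_natl; apply: ler_wpM2r; first exact: exprn_ge0.
by rewrite mulr1 -natrX ler_nat expnS expn1 (leq_trans (leqnSn _)) // leq_pmulr.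
Qed.
Lemma powmean (x y p : R) : 0 <= x -> 0 <= y -> 1 <= p ->
  2 * (x + y) `^ p <= 2 `^ p * (x `^ p + y `^ p).
Proof.
move=> x0 y0 p1.
have hc : (2^-1 * x + (1 - 2^-1) * y) `^ p <= 2^-1 * x `^ p + (1 - 2^-1) * y `^ p.
  apply: (convex_powR p1 (Itv01 _ _)) => //=;
    rewrite ?inE/= ?in_itv/= ?andbT // ?invr_ge0// invf_le1 ?ler1n //.
have h2 : (1 - 2^-1 : R) = 2^-1 by field.
rewrite h2 -mulrDr -mulrDr powRM ?invr_ge0 ?addr_ge0 // in hc.
have e : 2 `^ p * (2^-1) `^ p = 1 :> R.
  by rewrite -powRM ?invr_ge0 // mulfV // powR1.
have g2 : 0 < 2 `^ p :> R by rewrite powR_gt0.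
have : 2 `^ p * (((2 ^-1) `^ p) * (x + y) `^ p) <= 2 `^ p * (2^-1 * (x `^ p + y `^ p)).
  by rewrite ler_wpM2l // ?ltW // mulrC.
rewrite mulrA e mul1r => h.
have := ler_wpM2l (ler0n R 2) h.
rewrite mulrA (mulrC _ 2^-1) -mulrA in h; lra.
Qed.

Lemma finalineq (K p t : R) : 0 < K -> 1 < p -> 0 <= t ->
  - (2 * K `^ (p - 1)^-1) <= 2 * t `^ p / K - 2 * t.
Proof.
move=> K0 p1 t0.
set T := K `^ (p - 1)^-1.
have T0 : 0 <= T by exact: powR_ge0.
have tp0 : 0 <= 2 * t `^ p / K by rewrite mulr_ge0 ?mulr_ge0 ?powR_ge0 ?invr_ge0 ?ltW.
have [tT|Tt] := leP t T; first lra.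
have TK : T `^ (p - 1) = K.
  rewrite /T -powRrM mulVf ?powRr1 ?ltW //.
  by rewrite subr_eq0 gt_eqF.
have hq : K <= t `^ (p - 1).
  rewrite -TK; apply: ge0_ler_powR.
  - by rewrite subr_ge0 ltW.
  - by rewrite nnegrE.
  - by rewrite nnegrE.
  - exact: ltW.
have tp : t `^ p = t * t `^ (p - 1).
  rewrite -{2}(powRr1 t0) -powRD; first by rewrite addrC subrK.
  by apply/implyP => _; rewrite gt_eqF // (le_lt_trans T0 Tt).
have : 2 * t <= 2 * t `^ p / K.
  rewrite tp ler_pdivlMr // -mulrA ler_wpM2l //.
  exact: ler_wpM2l.
move=> h; lra.
Qed.

Lemma dist_le (S : set V) x y : S y -> dist_set S x <= enorm (x - y).
Proof.
move=> Sy; apply: (ge_inf _); last by exists y.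
by exists 0 => _ [z _ <-]; exact: enorm_ge0.
Qed.

Lemma dist_ge (S : set V) x y0 k : S y0 ->
  (forall y, S y -> k <= enorm (x - y)) -> k <= dist_set S x.
Proof.
move=> Sy0 hk; apply: lb_le_inf; first by exists (enorm (x - y0)), y0.
by move=> _ [z Sz <-]; exact: hk.
Qed.

Lemma proj_ineq (V1 : set V) v u1 y : convex_set_ V1 -> V1 u1 -> V1 y ->
  (forall z, V1 z -> enorm (v - u1) <= enorm (v - z)) ->
  dot (v - u1) (y - u1) <= 0.
Proof.
move=> cV Vu Vy hmin.
set g := dot (v - u1) (y - u1); set m := dot (y - u1) (y - u1).
have m0 : 0 <= m := dot_ge0 _.
rewrite leNgt; apply/negP => g0.
set t := g / (g + m).
have gm0 : 0 < g + m by lra.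
have t0 : 0 < t by rewrite divr_gt0.
have t1 : t <= 1 by rewrite ler_pdivrMr // mul1r; lra.
have t01 : 0 <= t <= 1 by rewrite (ltW t0) t1.
have Vz := cV y u1 Vy Vu t t01.
have := hmin _ Vz.
have -> : v - (t *: y + (1 - t) *: u1) = (v - u1) - t *: (y - u1).
  by apply/rowP => i; rewrite !mxE; ring.
move=> h.
have h2 : enorm (v - u1) ^+ 2 <= enorm (v - u1 - t *: (y - u1)) ^+ 2.
  by rewrite lerXn2r // nnegrE enorm_ge0.
have e : dot (v - u1 - t *: (y - u1)) (v - u1 - t *: (y - u1))
   = dot (v - u1) (v - u1) - 2 * t * g + t ^+ 2 * m.
  rewrite (dotBl (v - u1) (t *: (y - u1))) (dotBr (v - u1) (t *: (y - u1)) (v - u1)).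
  rewrite (dotBr (v - u1) (t *: (y - u1)) (t *: (y - u1))) !dotZl !dotZr.
  rewrite (dotC (y - u1) (v - u1)) -/g -/m; ring.
rewrite !enorm_sq e in h2.
have h3 : 2 * g <= t * m.
  rewrite -(ler_pM2l t0).
  have -> : t * (2 * g) = 2 * t * g by ring.
  have -> : t * (t * m) = t ^+ 2 * m by ring.
  lra.
have h4 : t * m <= g.
  rewrite /t mulrAC ler_pdivrMr // ler_pM2l //; lra.
lra.
Qed.

Arguments dist_ge {S x y0 k}.
Arguments dist_le {S} x {y}.
Arguments proj_ineq {V1} v {u1 y}.
Arguments powmean {x y p}.
Arguments finalineq {K p t}.

Lemma lin1 (P Q X : R) : P <= 0 -> Q <= X -> - X <= - P - Q.
Proof. lra. Qed.

Lemma lin2 (E T Y P G ab ba bb : R) : - (2 * T) <= Y - 2 * ab -> Y <= P ->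
  - ba <= G -> ba = ab -> E - 2 * T <= P + (bb + E + 2 * G) - bb.
Proof. move=> h1 h2 h3 e; rewrite e in h3; lra. Qed.

Arguments lin1 {P Q X}.
Arguments lin2 {E T Y P G ab ba bb}.

Lemma part1 (f : V -> R) (ell p kappa theta : R) (V1 V2 : set V) v :
  0 < ell -> 1 < p <= 2 ->
  (forall w, f w - finf f >= ell * dist_set (minimizers f) w `^ p) ->
  minimizers f = V1 `|` V2 ->
  compact V1 -> compact V2 ->
  convex_set_ V1 ->
  0 < kappa ->
  theta >= ell * diam (minimizers f) `^ p - finf f ->
    (forall u1, V1 u1 -> enorm (v - u1) = dist_set V1 v ->
      forall w, dist_set V1 w < dist_set V2 w ->
        Afun f kappa theta w v - Afun f kappa theta u1 v >=
        enorm (w - u1) ^+ 2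
        - 2 * ((2 `^ p * kappa / ell ^+ 2) `^ (p - 1)^-1)).
Proof.
move=> ell0 /andP[p1 p2] hA hMU cV1 cV2 cvx k0 hth u1 Vu1 hu1 w hw.
set M := minimizers f in hA hMU hth.
set m := finf f in hA hth.
have hM : forall x, M x -> f x = m by [].
have Mu1 : M u1 by rewrite hMU; left.
have cM : compact M by rewrite hMU; exact: compactU.
have [B hB] : exists B, forall x, M x -> enorm x <= B.
  case: (compact_bounded cM) => B0 [_ HB].
  exists (d.+1%:R * (B0 + 1)) => x Mx.
  apply: le_trans (enorm_le_mx x) _; rewrite ler_wpM2l //.
  by apply: (HB (B0 + 1)) => //; rewrite ltrDl.
set D := diam M.
have diam_ge : forall y z, M y -> M z -> enorm (y - z) <= D.
  move=> y z My Mz; apply: ub_le_sup; last by exists y => //; exists z.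
  exists (B + B) => _ [y' My' [z' Mz' <-]].
  apply: le_trans (enormD _ _) _; rewrite enormN; exact: lerD (hB _ _) (hB _ _).
have D0 : 0 <= D by have := diam_ge _ _ Mu1 Mu1; rewrite subrr enorm0.
set b := enorm (v - u1).
have b0 : 0 <= b := enorm_ge0 _.
set Dv := dist_set M v.
have Dv0 : 0 <= Dv by apply: (dist_ge Mu1) => y _; exact: enorm_ge0.
have hbD : b - D <= Dv.
  apply: (dist_ge Mu1) => z Mz.
  have : b <= enorm (v - z) + enorm (z - u1).
    rewrite /b; have -> : v - u1 = (v - z) + (z - u1) by rewrite addrA subrK.
    exact: enormD.
  have := diam_ge _ _ Mz Mu1; lra.
have pw1 : b `^ p <= (Dv + D) `^ p.
  apply: ge0_ler_powR; rewrite ?nnegrE ?addr_ge0 //; [lra | lra].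
have pw2 := powmean Dv0 D0 (ltW p1).
have g2p : 0 < 2 `^ p :> R by rewrite powR_gt0.
have hv := hA v; have fv : m <= f v.
  have : 0 <= ell * Dv `^ p by rewrite mulr_ge0 ?powR_ge0 ?ltW.
  rewrite /Dv; lra.
set S := f v + theta.
have hS : 2 * ell * b `^ p <= 2 `^ p * S.
  have hS1 : ell * (Dv `^ p + D `^ p) <= S by rewrite /S /Dv /D in hv hth *; lra.
  have : 2 * b `^ p <= 2 `^ p * (Dv `^ p + D `^ p) by lra.
  move=> h; have h' := ler_wpM2l (ltW ell0) h.
  have h'' := ler_wpM2l (ltW g2p) hS1.
  rewrite (_ : 2 * ell * b `^ p = ell * (2 * b `^ p)); last by ring.
  apply: le_trans h' _; rewrite mulrCA; exact: h''.
set a := dist_set V1 w.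
have a0 : 0 <= a by apply: (dist_ge Vu1) => y _; exact: enorm_ge0.
have haw : a <= dist_set M w.
  apply: (dist_ge Mu1) => z; rewrite hMU => -[Vz|Vz].
    exact: dist_le.
  apply: ltW; apply: lt_le_trans hw _; exact: dist_le.
have hfw : ell * a `^ p <= f w - m.
  apply: le_trans (hA w); apply: ler_wpM2l; first exact: ltW.
  apply: ge0_ler_powR => //; [exact: ltW (lt_trans ltr01 p1) | by rewrite nnegrE (le_trans a0 haw)].
have fu1 : f u1 = m := hM _ Mu1.
set G := dot (v - u1) (u1 - w).
have hvw : enorm (v - w) ^+ 2 = b ^+ 2 + enorm (w - u1) ^+ 2 + 2 * G.
  have -> : v - w = (v - u1) + (u1 - w) by rewrite addrA subrK.
  rewrite (enormB w u1) !enorm_sq /G (dotDl (v - u1) (u1 - w)).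
  rewrite (dotDr (v - u1) (u1 - w) (v - u1)) (dotDr (v - u1) (u1 - w) (u1 - w)).
  rewrite (dotC (u1 - w) (v - u1)); ring.
have hGy : forall y, V1 y -> - (b * enorm (w - y)) <= G.
  move=> y Vy.
  have hmin : forall z, V1 z -> enorm (v - u1) <= enorm (v - z).
    by move=> z Vz; rewrite hu1; exact: dist_le.
  have hp := proj_ineq v cvx Vu1 Vy hmin.
  have hc := cs (v - u1) (w - y).
  have -> : G = - dot (v - u1) (y - u1) - dot (v - u1) (w - y).
    by rewrite /G !dotBr; ring.
  rewrite /b; exact: lin1 hp hc.
have hG : - (b * a) <= G.
  have [bz|bn0] := eqVneq b 0.
    by have := hGy _ Vu1; rewrite -/b bz !mul0r.
  have bp : 0 < b by rewrite lt0r bn0.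
  have : - G / b <= a.
    apply: (dist_ge Vu1) => y Vy; have := hGy _ Vy.
    rewrite -/b => h; rewrite ler_pdivrMr // mulrC; by rewrite lerNl.
  rewrite ler_pdivrMr // mulrC => h; by rewrite lerNl.
set K := 2 `^ p * kappa / ell ^+ 2.
have K0 : 0 < K by rewrite /K divr_gt0 ?mulr_gt0 ?exprn_gt0.
have hfin := finalineq K0 p1 (mulr_ge0 a0 b0).
rewrite [(a * b) `^ p]powRM // in hfin.
have hP : 2 * (a `^ p * b `^ p) / K <= kappa^-1 * (f w - m) * S.
  rewrite /K.
  have ap := powR_ge0 a p; have bp := powR_ge0 b p.
  have : (ell * a `^ p) * (2 * ell * b `^ p) <= (f w - m) * (2 `^ p * S).
    apply: ler_pM.
    - by rewrite mulr_ge0 // ltW.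
    - by rewrite !mulr_ge0 // ltW.
    - exact: hfw.
    - exact: hS.
  move=> h.
  have -> : 2 * (a `^ p * b `^ p) / (2 `^ p * kappa / ell ^+ 2)
     = kappa^-1 * (2 `^ p)^-1 * ((ell * a `^ p) * (2 * ell * b `^ p)).
    by field; rewrite !gt_eqF.
  have -> : kappa^-1 * (f w - m) * S = kappa^-1 * (2 `^ p)^-1 * ((f w - m) * (2 `^ p * S)).
    by field; rewrite !gt_eqF.
  by rewrite ler_wpM2l // mulr_ge0 // invr_ge0 ltW.
rewrite /Afun fu1.
have -> : kappa^-1 * f w * (f v + theta) + enorm (v - w) ^+ 2 -
  (kappa^-1 * m * (f v + theta) + enorm (v - u1) ^+ 2)
  = kappa^-1 * (f w - m) * S + enorm (v - w) ^+ 2 - b ^+ 2 by rewrite /S /b; ring.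
rewrite hvw -/K.
exact: (lin2 hfin hP hG (mulrC b a)).
Qed.
End S.

Theorem mainTheorem11 (R : realType) (d : nat) (f : 'rV[R]_d -> R)
  (ell p kappa theta : R) (V1 V2 : set 'rV[R]_d) :
  continuous f ->
  has_lbound (range f) ->
  0 < ell -> 1 < p <= 2 ->
  (forall w, f w - finf f >= ell * dist_set (minimizers f) w `^ p) ->
  minimizers f = V1 `|` V2 ->
  V1 `&` V2 = set0 ->
  compact V1 -> compact V2 ->
  convex_set_ V1 -> convex_set_ V2 ->
  smooth_boundary V1 -> smooth_boundary V2 ->
  0 < kappa ->
  theta >= ell * diam (minimizers f) `^ p - finf f ->
  forall v : 'rV[R]_d,
    (forall u1, V1 u1 -> enorm (v - u1) = dist_set V1 v ->
      forall w, dist_set V1 w < dist_set V2 w ->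
        Afun f kappa theta w v - Afun f kappa theta u1 v >=
        enorm (w - u1) ^+ 2
        - 2 * ((2 `^ p * kappa / ell ^+ 2) `^ (p - 1)^-1)) /\
    (forall u2, V2 u2 -> enorm (v - u2) = dist_set V2 v ->
      forall w, dist_set V2 w < dist_set V1 w ->
        Afun f kappa theta w v - Afun f kappa theta u2 v >=
        enorm (w - u2) ^+ 2
        - 2 * ((2 `^ p * kappa / ell ^+ 2) `^ (p - 1)^-1)).
Proof.
move=> _ _ ell0 hp hA hMU _ cV1 cV2 cx1 cx2 _ _ k0 hth v; split.
  exact: part1 ell0 hp hA hMU cV1 cV2 cx1 k0 hth.
apply: part1 ell0 hp hA _ cV2 cV1 cx2 k0 hth.
by rewrite hMU setUC.
Qed.
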